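(* Let $d$ be a compatible metric on the Cantor space $\mathbf{C}$ and let $h:\mathbf{C}\to\mathbf{C}$ be a homeomorphism which is an isometry such that the orbit $\mathrm{orb}(x,h)$ is nowhere dense in $\mathbf{C}$ for every $x\in\mathbf{C}$. Then there exist $\Phi=(\varphi^L,\varphi^U)$ such that $\mathbf{F}_\Phi$ is a Fraïssé fence and a homeomorphism $\hat h$ of $\mathbf{F}_\Phi$ which is an isometry such that $h$ is a factor of $\hat h$. Moreover, if $\{K_n\}$ is a sequence of closed, $h$-invariant, nowhere dense subsets of $\mathbf{C}$, then $\Phi$ can be chosen so that $\varphi^L=\varphi^U$ on $\bigcup_n K_n$.
   Context: For $\Phi=(\varphi^L,\varphi^U)$ with $\varphi^L,\varphi^U:\mathbf{C}\to[0,1]$, $\varphi^L$ lower semicontinuous, $\varphi^U$ upper semicontinuous, $\varphi^L\le\varphi^U$, the fence is $\mathbf{F}_\Phi=\{(x,t)\in\mathbf{C}\times[0,1]:\varphi^L(x)\le t\le\varphi^U(x)\}$ with the maximum metric of $\mathbf{C}\times[0,1]$, and $\mathbf{F}_\Phi(x)=\{t:(x,t)\in\mathbf{F}_\Phi\}$. $\mathbf{F}_\Phi$ is a Fraïssé fence if for every $x\in\mathbf{C}$ and every continuum $I\subseteq\mathbf{F}_\Phi(x)$ there is a sequence $x_k\in\mathbf{C}\setminus\{x\}$ converging to $x$ such that each $\mathbf{F}_\Phi(x_k)$ is a nondegenerate arc and $\mathbf{F}_\Phi(x_k)\to I$ in the Hausdorff metric. *)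

(* Defs.v *)
From Stdlib Require Export Reals.
Open Scope R_scope.

Definition Cantor := nat -> bool.

Definition agree (n : nat) (x y : Cantor) : Prop :=
  forall i, (i < n)%nat -> x i = y i.

Definition is_metric {X : Type} (d : X -> X -> R) : Prop :=
  (forall x y, 0 <= d x y) /\
  (forall x y, d x y = 0 <-> x = y) /\
  (forall x y, d x y = d y x) /\
  (forall x y z, d x z <= d x y + d y z).

(** d is a metric on C inducing the product topology: at every point the
    d-balls and the cylinders form equivalent neighbourhood bases. *)
Definition compatible_metric (d : Cantor -> Cantor -> R) : Prop :=
  is_metric d /\
  forall x,
    (forall eps, 0 < eps -> exists n, forall y, agree n x y -> d x y < eps) /\
    (forall n, exists eps, 0 < eps /\ forall y, d x y < eps -> agree n x y).

Definition mcontinuous {X Y : Type} (dX : X -> X -> R) (dY : Y -> Y -> R)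
  (f : X -> Y) : Prop :=
  forall x eps, 0 < eps -> exists delta, 0 < delta /\
    forall y, dX x y < delta -> dY (f x) (f y) < eps.

Definition homeomorphism {X : Type} (dX : X -> X -> R) (f : X -> X) : Prop :=
  exists g : X -> X, (forall x, g (f x) = x) /\ (forall x, f (g x) = x) /\
    mcontinuous dX dX f /\ mcontinuous dX dX g.

Definition isometry {X : Type} (dX : X -> X -> R) (f : X -> X) : Prop :=
  forall x y, dX (f x) (f y) = dX x y.

Definition mclosure {X : Type} (d : X -> X -> R) (A : X -> Prop) : X -> Prop :=
  fun x => forall eps, 0 < eps -> exists y, A y /\ d x y < eps.

Definition minterior {X : Type} (d : X -> X -> R) (A : X -> Prop) : X -> Prop :=
  fun x => exists eps, 0 < eps /\ forall y, d x y < eps -> A y.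

Definition mclosed {X : Type} (d : X -> X -> R) (A : X -> Prop) : Prop :=
  forall x, mclosure d A x -> A x.

Definition nowhere_dense {X : Type} (d : X -> X -> R) (A : X -> Prop) : Prop :=
  forall x, ~ minterior d (mclosure d A) x.

Definition orbit {X : Type} (h : X -> X) (x : X) : X -> Prop :=
  fun y => exists n : nat, y = Nat.iter n h x.

Definition lsc (d : Cantor -> Cantor -> R) (f : Cantor -> R) : Prop :=
  forall x eps, 0 < eps -> exists delta, 0 < delta /\
    forall y, d x y < delta -> f x - eps < f y.

Definition usc (d : Cantor -> Cantor -> R) (f : Cantor -> R) : Prop :=
  forall x eps, 0 < eps -> exists delta, 0 < delta /\
    forall y, d x y < delta -> f y < f x + eps.

Definition admissible (d : Cantor -> Cantor -> R) (phiL phiU : Cantor -> R)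
  : Prop :=
  (forall x, 0 <= phiL x <= 1) /\ (forall x, 0 <= phiU x <= 1) /\
  lsc d phiL /\ usc d phiU /\ (forall x, phiL x <= phiU x).

Definition fence (phiL phiU : Cantor -> R) : Type :=
  { p : Cantor * R | phiL (fst p) <= snd p <= phiU (fst p) }.

Definition fence_dist (d : Cantor -> Cantor -> R) (phiL phiU : Cantor -> R)
  (p q : fence phiL phiU) : R :=
  Rmax (d (fst (proj1_sig p)) (fst (proj1_sig q)))
       (Rabs (snd (proj1_sig p) - snd (proj1_sig q))).

Definition fiber (phiL phiU : Cantor -> R) (x : Cantor) : R -> Prop :=
  fun t => phiL x <= t <= phiU x.

Definition connectedR (I : R -> Prop) : Prop :=
  forall U V : R -> Prop, open_set U -> open_set V ->
    (forall t, I t -> U t \/ V t) ->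
    (exists t, I t /\ U t) -> (exists t, I t /\ V t) ->
    exists t, I t /\ U t /\ V t.

Definition continuumR (I : R -> Prop) : Prop :=
  (exists t, I t) /\ compact I /\ connectedR I.

(** A (nondegenerate) arc: a homeomorphic image of [0,1], i.e. the image of
    [0,1] under a continuous injective map. *)
Definition arcR (A : R -> Prop) : Prop :=
  exists f : R -> R,
    (forall s, 0 <= s <= 1 -> continuity_pt f s) /\
    (forall s1 s2, 0 <= s1 <= 1 -> 0 <= s2 <= 1 -> f s1 = f s2 -> s1 = s2) /\
    (forall t, A t <-> exists s, 0 <= s <= 1 /\ f s = t).

Definition hausdorff_cvg (A : nat -> R -> Prop) (I : R -> Prop) : Prop :=
  forall eps, 0 < eps -> exists N, forall k, (N <= k)%nat ->
    (forall a, A k a -> exists b, I b /\ Rabs (a - b) < eps) /\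
    (forall b, I b -> exists a, A k a /\ Rabs (a - b) < eps).

Definition seq_cvg (d : Cantor -> Cantor -> R) (x : nat -> Cantor) (l : Cantor)
  : Prop :=
  forall eps, 0 < eps -> exists N, forall k, (N <= k)%nat -> d (x k) l < eps.

Definition fraisse_fence (d : Cantor -> Cantor -> R) (phiL phiU : Cantor -> R)
  : Prop :=
  forall x (I : R -> Prop),
    continuumR I -> (forall t, I t -> fiber phiL phiU x t) ->
    exists xs : nat -> Cantor,
      (forall k, xs k <> x) /\ seq_cvg d xs x /\
      (forall k, arcR (fiber phiL phiU (xs k))) /\
      hausdorff_cvg (fun k => fiber phiL phiU (xs k)) I.

Definition factor_of {X Y : Type} (dX : X -> X -> R) (dY : Y -> Y -> R)
  (g : Y -> Y) (f : X -> X) : Prop :=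
  exists pi : X -> Y, mcontinuous dX dY pi /\
    (forall y, exists x, pi x = y) /\ (forall x, pi (f x) = g (pi x)).

Definition good_fence (d : Cantor -> Cantor -> R) (h : Cantor -> Cantor)
  (phiL phiU : Cantor -> R) : Prop :=
  admissible d phiL phiU /\ fraisse_fence d phiL phiU /\
  exists hh : fence phiL phiU -> fence phiL phiU,
    homeomorphism (fence_dist d phiL phiU) hh /\
    isometry (fence_dist d phiL phiU) hh /\
    factor_of (fence_dist d phiL phiU) d h hh.

(* Main.v *)
Require Import Defs.
From Stdlib Require Import Reals Lra Lia Classical ClassicalEpsilon Cantor List Arith ZArith FunctionalExtensionality PropExtensionality ProofIrrelevance.
Open Scope R_scope.

Definition supR (E : R -> Prop) : R :=
  epsilon (inhabits 0) (fun m => (forall v, E v -> v <= m) /\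
     (forall m', (forall v, E v -> v <= m') -> m <= m')).

Lemma supR_spec (E : R -> Prop) (M : R) :
  (exists v, E v) -> (forall v, E v -> v <= M) ->
  (forall v, E v -> v <= supR E) /\
  (forall m', (forall v, E v -> v <= m') -> supR E <= m').
Proof.
  intros Hne Hb. unfold supR. apply epsilon_spec.
  assert (Hbd : bound E) by (exists M; exact Hb).
  destruct (completeness E Hbd Hne) as [m [H1 H2]].
  exists m. split; [exact H1| exact H2].
Qed.

Lemma supR_ub (E : R -> Prop) M v : (forall v, E v -> v <= M) -> E v -> v <= supR E.
Proof. intros Hb Hv. apply (proj1 (supR_spec E M (ex_intro _ v Hv) Hb)); auto. Qed.

Lemma supR_le (E : R -> Prop) M m' : (exists v, E v) -> (forall v, E v -> v <= M) ->
  (forall v, E v -> v <= m') -> supR E <= m'.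
Proof. intros Hne Hb H. apply (proj2 (supR_spec E M Hne Hb)); auto. Qed.

Lemma supR_approx (E : R -> Prop) M eps : (exists v, E v) -> (forall v, E v -> v <= M) ->
  0 < eps -> exists v, E v /\ supR E - eps < v.
Proof.
  intros Hne Hb He. apply NNPP. intro Hn.
  assert (supR E <= supR E - eps).
  { apply supR_le with M; auto. intros v Hv.
    destruct (Rle_or_lt v (supR E - eps)); auto. exfalso; apply Hn; eauto. }
  lra.
Qed.

Definition infR (E : R -> Prop) : R := - supR (fun v => E (- v)).

Lemma infR_lb (E : R -> Prop) m v : (forall v, E v -> m <= v) -> E v -> infR E <= v.
Proof.
  intros Hb Hv. unfold infR.
  assert (- v <= supR (fun v => E (-v))); [|lra].
  apply supR_ub with (-m). intros w Hw. apply Hb in Hw. lra.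
  rewrite Ropp_involutive; auto.
Qed.

Lemma infR_ge (E : R -> Prop) m m' : (exists v, E v) -> (forall v, E v -> m <= v) ->
  (forall v, E v -> m' <= v) -> m' <= infR E.
Proof.
  intros [v Hv] Hb H. unfold infR.
  assert (supR (fun v => E (-v)) <= - m'); [|lra].
  apply supR_le with (-m).
  exists (-v); rewrite Ropp_involutive; auto.
  intros w Hw. apply Hb in Hw. lra.
  intros w Hw. apply H in Hw. lra.
Qed.

Lemma infR_approx (E : R -> Prop) m eps : (exists v, E v) -> (forall v, E v -> m <= v) ->
  0 < eps -> exists v, E v /\ v < infR E + eps.
Proof.
  intros [v0 Hv0] Hb He. unfold infR.
  destruct (supR_approx (fun v => E (-v)) (-m) eps) as [w [Hw1 Hw2]]; auto.
  exists (-v0); rewrite Ropp_involutive; auto.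
  intros w Hw. apply Hb in Hw. lra.
  exists (-w). split; auto. lra.
Qed.

Lemma agree_mono n m x y : (m <= n)%nat -> agree n x y -> agree m x y.
Proof. intros Hmn H i Hi. apply H. lia. Qed.
Lemma agree_sym n x y : agree n x y -> agree n y x.
Proof. intros H i Hi. symmetry. auto. Qed.
Lemma agree_trans n x y z : agree n x y -> agree n y z -> agree n x z.
Proof. intros H1 H2 i Hi. rewrite H1, H2; auto. Qed.

Section Basics.
Variable d : Cantor -> Cantor -> R.
Variable h : Cantor -> Cantor.
Hypothesis Hc : compatible_metric d.
Hypothesis Hiso : isometry d h.

Lemma d_nonneg x y : 0 <= d x y.
Proof. destruct Hc as [[H _] _]. apply H. Qed.
Lemma d_sym x y : d x y = d y x.
Proof. destruct Hc as [[_ [_ [H _]]] _]. apply H. Qed.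
Lemma d_tri x y z : d x z <= d x y + d y z.
Proof. destruct Hc as [[_ [_ [_ H]]] _]. apply H. Qed.
Lemma d_refl x : d x x = 0.
Proof. destruct Hc as [[_ [H _]] _]. apply H. reflexivity. Qed.
Lemma d_eq0 x y : d x y = 0 -> x = y.
Proof. destruct Hc as [[_ [H _]] _]. apply H. Qed.
Lemma compat1 x eps : 0 < eps -> exists n, forall y, agree n x y -> d x y < eps.
Proof. destruct Hc as [_ H]. apply H. Qed.
Lemma compat2 x n : exists eps, 0 < eps /\ forall y, d x y < eps -> agree n x y.
Proof. destruct Hc as [_ H]. apply H. Qed.

Lemma iso_iter n x y : d (Nat.iter n h x) (Nat.iter n h y) = d x y.
Proof. induction n; simpl; auto. rewrite Hiso; auto. Qed.

Definition dset x y := fun v => exists a b, v = d (Nat.iter a h x) (Nat.iter b h y).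
Definition delta x y := infR (dset x y).

Lemma dset_ne x y : exists v, dset x y v.
Proof. exists (d x y). exists 0%nat, 0%nat. reflexivity. Qed.
Lemma dset_lb x y : forall v, dset x y v -> 0 <= v.
Proof. intros v [a [b ->]]. apply d_nonneg. Qed.

Lemma delta_le x y a b : delta x y <= d (Nat.iter a h x) (Nat.iter b h y).
Proof. apply infR_lb with 0. apply dset_lb. exists a, b; reflexivity. Qed.
Lemma delta_nonneg x y : 0 <= delta x y.
Proof. apply infR_ge with 0. apply dset_ne. apply dset_lb. apply dset_lb. Qed.
Lemma delta_approx x y eps : 0 < eps -> exists a b, d (Nat.iter a h x) (Nat.iter b h y) < delta x y + eps.
Proof.
  intro He. destruct (infR_approx (dset x y) 0 eps (dset_ne x y) (dset_lb x y) He) as [v [[a [b ->]] Hv]].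
  exists a, b. exact Hv.
Qed.
Lemma delta_le_d x y : delta x y <= d x y.
Proof. apply (delta_le x y 0 0). Qed.
Lemma delta_refl x : delta x x = 0.
Proof. pose proof (delta_le_d x x). pose proof (delta_nonneg x x). rewrite d_refl in H. lra. Qed.
Lemma delta_ge x y m : (forall a b, m <= d (Nat.iter a h x) (Nat.iter b h y)) -> m <= delta x y.
Proof. intro H. apply infR_ge with 0. apply dset_ne. apply dset_lb. intros v [a [b ->]]. auto. Qed.
Lemma delta_sym x y : delta x y = delta y x.
Proof.
  apply Rle_antisym; apply delta_ge; intros a b; rewrite d_sym; apply delta_le.
Qed.
Lemma iter_shift a b x : Nat.iter (a + b) h x = Nat.iter a h (Nat.iter b h x).
Proof. apply Nat.iter_add. Qed.
Lemma delta_tri x y z : delta x z <= delta x y + delta y z.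
Proof.
  apply Rnot_lt_le. intro Hlt.
  set (e := (delta x z - delta x y - delta y z) / 2).
  assert (He : 0 < e) by (unfold e; lra).
  destruct (delta_approx x y e He) as [a [b H1]].
  destruct (delta_approx y z e He) as [b' [c H2]].
  assert (E1 : d (Nat.iter a h x) (Nat.iter b h y) = d (Nat.iter (b' + a) h x) (Nat.iter (b' + b) h y)).
  { rewrite !iter_shift, iso_iter; auto. }
  assert (E2 : d (Nat.iter b' h y) (Nat.iter c h z) = d (Nat.iter (b' + b) h y) (Nat.iter (b + c) h z)).
  { rewrite Nat.add_comm. rewrite !iter_shift, iso_iter; auto. }
  pose proof (delta_le x z (b' + a) (b + c)).
  pose proof (d_tri (Nat.iter (b' + a) h x) (Nat.iter (b' + b) h y) (Nat.iter (b + c) h z)).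
  unfold e in *. lra.
Qed.
Lemma delta_h x y : delta (h x) y = delta x y.
Proof.
  apply Rle_antisym; apply delta_ge; intros a b.
  - replace (Nat.iter a h x) with (Nat.iter a h x) by reflexivity.
    rewrite <- (iso_iter 1 (Nat.iter a h x) (Nat.iter b h y)). simpl.
    replace (h (Nat.iter a h x)) with (Nat.iter a h (h x)).
    replace (h (Nat.iter b h y)) with (Nat.iter (S b) h y) by reflexivity.
    apply delta_le. rewrite <- Nat.iter_succ_r. reflexivity.
  - replace (Nat.iter a h (h x)) with (Nat.iter (S a) h x) by (rewrite Nat.iter_succ_r; reflexivity).
    apply delta_le.
Qed.
Lemma delta_lip x y z : Rabs (delta x z - delta y z) <= delta x y.
Proof.
  pose proof (delta_tri x y z). pose proof (delta_tri y x z). rewrite (delta_sym y x) in H0.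
  apply Rabs_le. lra.
Qed.

End Basics.

Lemma chain_limit (n : nat -> nat) (z : nat -> Cantor) :
  (forall j, (j <= n j)%nat) -> (forall j, (n j <= n (S j))%nat) ->
  (forall j, agree (n j) (z j) (z (S j))) ->
  forall j, agree (n j) (z j) (fun i => z (S i) i).
Proof.
  intros Hn Hm Ha.
  assert (Hmono : forall j k, (j <= k)%nat -> (n j <= n k)%nat).
  { intros j k Hjk. induction Hjk; auto. specialize (Hm m). lia. }
  assert (Hch : forall j k, (j <= k)%nat -> agree (n j) (z j) (z k)).
  { intros j k Hjk. induction Hjk. intros i Hi; reflexivity.
    apply agree_trans with (z m); auto. apply agree_mono with (n m); auto. }
  intros j i Hi.
  destruct (le_lt_dec (S i) j) as [H|H].
  - symmetry. apply (Hch (S i) j H). specialize (Hn (S i)). lia.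
  - apply (Hch j (S i)). lia. exact Hi.
Qed.

Definition upd (z : Cantor) (j : nat) (b : bool) : Cantor :=
  fun i => if Nat.eqb i j then b else z i.

Lemma cluster (u : nat -> Cantor) :
  exists c, forall N M, exists k, (M <= k)%nat /\ agree N c (u k).
Proof.
  set (Inf := fun j z => forall M, exists k, (M <= k)%nat /\ agree j z (u k)).
  assert (Hstep : forall j z, Inf j z -> exists z', agree j z z' /\ Inf (S j) z').
  { intros j z Hz.
    destruct (classic (Inf (S j) (upd z j true))) as [Ht|Ht].
    - exists (upd z j true). split; auto.
      intros i Hi. unfold upd. destruct (Nat.eqb_spec i j); [lia|reflexivity].
    - destruct (classic (Inf (S j) (upd z j false))) as [Hf|Hf].
      + exists (upd z j false). split; auto.
        intros i Hi. unfold upd. destruct (Nat.eqb_spec i j); [lia|reflexivity].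
      + exfalso. unfold Inf in Ht, Hf.
        apply not_all_ex_not in Ht. destruct Ht as [M1 HM1].
        apply not_all_ex_not in Hf. destruct Hf as [M2 HM2].
        destruct (Hz (max M1 M2)) as [k [Hk Hag]].
        assert (Hag' : agree (S j) (upd z j (u k j)) (u k)).
        { intros i Hi. unfold upd. destruct (Nat.eqb_spec i j). subst; reflexivity. apply Hag; lia. }
        destruct (u k j).
        * apply HM1. exists k. split; [lia|exact Hag'].
        * apply HM2. exists k. split; [lia|exact Hag']. }
  set (stp := fun j z => epsilon (inhabits z) (fun z' => agree j z z' /\ Inf (S j) z')).
  set (ch := fix ch (j : nat) : Cantor := match j with O => u O | S j' => stp j' (ch j') end).
  assert (Hinv : forall j, Inf j (ch j)).
  { induction j. intros M. exists M. split; auto. intros i Hi; lia.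
    simpl. unfold stp. pose proof (epsilon_spec (inhabits (ch j)) (fun z' => agree j (ch j) z' /\ Inf (S j) z') (Hstep j (ch j) IHj)).
    apply H. }
  assert (Hag : forall j, agree j (ch j) (ch (S j))).
  { intro j. simpl. unfold stp. pose proof (epsilon_spec (inhabits (ch j)) (fun z' => agree j (ch j) z' /\ Inf (S j) z') (Hstep j (ch j) (Hinv j))).
    apply H. }
  pose proof (chain_limit (fun j => j) ch (fun j => le_n j) (fun j => le_S _ _ (le_n j)) Hag) as Hlim.
  exists (fun i => ch (S i) i). intros N M.
  destruct (Hinv N M) as [k [Hk Hk2]]. exists k. split; auto.
  apply agree_trans with (ch N). apply agree_sym. apply Hlim. exact Hk2.
Qed.

Section Rec.
Variable d : Cantor -> Cantor -> R.
Variable h : Cantor -> Cantor.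
Hypothesis Hc : compatible_metric d.
Hypothesis Hiso : isometry d h.

Lemma recurrence p eps K0 : 0 < eps -> exists n, (K0 <= n)%nat /\ d p (Nat.iter n h p) < eps.
Proof.
  intro He.
  destruct (cluster (fun k => Nat.iter k h p)) as [c Hc'].
  destruct (compat1 d Hc c (eps/2)) as [N HN]. lra.
  destruct (Hc' N 0%nat) as [k1 [_ H1]].
  destruct (Hc' N (k1 + K0)%nat) as [k2 [Hk2 H2]].
  exists (k2 - k1)%nat. split. lia.
  apply HN in H1. apply HN in H2.
  pose proof (d_tri d Hc (Nat.iter k1 h p) c (Nat.iter k2 h p)) as Ht.
  rewrite (d_sym d Hc (Nat.iter k1 h p) c) in Ht.
  assert (E : Nat.iter k2 h p = Nat.iter k1 h (Nat.iter (k2 - k1) h p)).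
  { rewrite <- Nat.iter_add. f_equal. lia. }
  rewrite E in Ht. rewrite (iso_iter d h Hiso) in Ht. rewrite E in H2. lra.
Qed.

Lemma delta_small p w e : 0 < e -> delta d h p w < e -> exists m, d p (Nat.iter m h w) < 2 * e.
Proof.
  intros He Hd.
  destruct (delta_approx d h Hc p w (e - delta d h p w)) as [a [b Hab]]. lra.
  destruct (recurrence p e a He) as [n [Hn Hn2]].
  exists ((n - a) + b)%nat.
  assert (E1 : Nat.iter n h p = Nat.iter (n - a) h (Nat.iter a h p)).
  { rewrite <- Nat.iter_add. f_equal. lia. }
  rewrite Nat.iter_add.
  pose proof (d_tri d Hc p (Nat.iter n h p) (Nat.iter (n - a) h (Nat.iter b h w))).
  rewrite E1 in H at 2. rewrite (iso_iter d h Hiso) in H. lra.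
Qed.

Lemma class_closure p z : delta d h z p = 0 -> mclosure d (orbit h p) z.
Proof.
  intros H0 eps He.
  destruct (delta_small z p (eps/2)) as [m Hm]. lra. lra.
  exists (Nat.iter m h p). split. exists m; reflexivity. lra.
Qed.

Lemma inv_iter (K : Cantor -> Prop) : (forall x, K x <-> K (h x)) ->
  forall n w, K w -> K (Nat.iter n h w).
Proof. intros HK n w Hw. induction n; simpl; auto. apply (proj1 (HK _)); auto. Qed.

Lemma closed_sep (K : Cantor -> Prop) p : mclosed d K -> ~ K p ->
  exists e, 0 < e /\ forall y, K y -> e <= d p y.
Proof.
  intros Hcl Hp.
  assert (Hn : ~ mclosure d K p) by (intro; apply Hp; apply Hcl; auto).
  unfold mclosure in Hn. apply not_all_ex_not in Hn. destruct Hn as [e He].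
  exists e. apply imply_to_and in He. destruct He as [He1 He2]. split; auto.
  intros y Hy. apply Rnot_lt_le. intro Hlt. apply He2. exists y. auto.
Qed.

Lemma mu_exists (K : Cantor -> Prop) p : mclosed d K -> (forall x, K x <-> K (h x)) -> ~ K p ->
  exists mu, 0 < mu /\ forall w, K w -> mu <= delta d h p w.
Proof.
  intros Hcl HK Hp. destruct (closed_sep K p Hcl Hp) as [e [He He2]].
  exists (e/2). split. lra. intros w Hw. apply Rnot_lt_le. intro Hlt.
  destruct (delta_small p w (e/2)) as [m Hm]. lra. auto.
  pose proof (He2 _ (inv_iter K HK m w Hw)). lra.
Qed.

Lemma mu_exists_list (K : Cantor -> Prop) (P : list Cantor) : mclosed d K -> (forall x, K x <-> K (h x)) ->
  (forall p, In p P -> ~ K p) ->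
  exists mu, 0 < mu /\ forall p w, In p P -> K w -> mu <= delta d h p w.
Proof.
  intros Hcl HK. induction P as [|p P IH]; intros HP.
  - exists 1. split. lra. intros p w [].
  - destruct IH as [mu1 [Hm1 Hm1']]. intros q Hq. apply HP. right; auto.
    destruct (mu_exists K p Hcl HK (HP p (or_introl eq_refl))) as [mu2 [Hm2 Hm2']].
    exists (Rmin mu1 mu2). split. apply Rmin_pos; auto.
    intros q w [<-|Hq] Hw.
    + eapply Rle_trans. apply Rmin_r. auto.
    + eapply Rle_trans. apply Rmin_l. auto.
Qed.

Definition ND (A : Cantor -> Prop) : Prop :=
  forall z r, 0 < r -> exists w r', 0 < r' /\ (forall u, d w u < r' -> d z u < r) /\
     (forall u, d w u < r' -> ~ A u).

Lemma nd_ND A : nowhere_dense d A -> ND (mclosure d A).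
Proof.
  intros HA z r Hr.
  specialize (HA z). unfold minterior in HA.
  assert (Hex : exists y, d z y < r /\ ~ mclosure d A y).
  { apply NNPP. intro Hn. apply HA. exists r. split; auto. intros y Hy.
    apply NNPP. intro Hy2. apply Hn. eauto. }
  destruct Hex as [y [Hy1 Hy2]].
  unfold mclosure in Hy2. apply not_all_ex_not in Hy2. destruct Hy2 as [e He].
  apply imply_to_and in He. destruct He as [He1 He2].
  exists y, (Rmin (e/2) (r - d z y)). split. apply Rmin_pos; lra.
  split.
  - intros u Hu. pose proof (Rmin_r (e/2) (r - d z y)). pose proof (d_tri d Hc z y u). lra.
  - intros u Hu Hcu. destruct (Hcu (e/2)) as [v [Hv1 Hv2]]. lra.
    apply He2. exists v. split; auto. pose proof (Rmin_l (e/2) (r - d z y)).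
    pose proof (d_tri d Hc y u v). lra.
Qed.

Lemma ND_sub A B : (forall x, A x -> B x) -> ND B -> ND A.
Proof.
  intros Hs HB z r Hr. destruct (HB z r Hr) as [w [r' [H1 [H2 H3]]]].
  exists w, r'. split; auto. split; auto. intros u Hu HAu. apply (H3 u Hu). auto.
Qed.

Lemma ND_union A B : ND A -> ND B -> ND (fun x => A x \/ B x).
Proof.
  intros HA HB z r Hr.
  destruct (HA z r Hr) as [w [r' [H1 [H2 H3]]]].
  destruct (HB w r' H1) as [w' [r'' [H1' [H2' H3']]]].
  exists w', r''. split; auto. split; auto.
  intros u Hu [Hu'|Hu']. apply (H3 u); auto. apply (H3' u); auto.
Qed.

Lemma ND_empty : ND (fun _ => False).
Proof. intros z r Hr. exists z, r. split; auto. Qed.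

Lemma ND_closed A : mclosed d A -> nowhere_dense d A -> ND A.
Proof.
  intros Hcl Hn. apply ND_sub with (mclosure d A). intros x Hx eps He. exists x. split; auto.
  rewrite (d_refl d Hc). auto. apply nd_ND; auto.
Qed.

Lemma ND_class (Hnd : forall x, nowhere_dense d (orbit h x)) p : ND (fun z => delta d h z p = 0).
Proof.
  apply ND_sub with (mclosure d (orbit h p)). intros x Hx. apply class_closure; auto.
  apply nd_ND; auto.
Qed.

Lemma ND_classes (Hnd : forall x, nowhere_dense d (orbit h x)) (P : list Cantor) :
  ND (fun z => exists p, In p P /\ delta d h z p = 0).
Proof.
  induction P as [|p P IH].
  - apply ND_sub with (fun _ => False). intros x [p [[] _]]. apply ND_empty.
  - apply ND_sub with (fun z => delta d h z p = 0 \/ exists q, In q P /\ delta d h z q = 0).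
    intros x [q [[<-|Hq] Hx]]; [left; auto | right; eauto].
    apply ND_union; auto. apply ND_class; auto.
Qed.

Lemma baire (W : Cantor -> Prop) (F : nat -> Cantor -> Prop) x0 :
  (forall z, W z -> exists r, 0 < r /\ forall u, d z u < r -> W u) -> W x0 ->
  (forall k, ND (F k)) -> exists y, W y /\ forall k, ~ F k y.
Proof.
  intros HW Hx0 HF.
  assert (Hstep : forall k (nz : nat * Cantor), exists nz' : nat * Cantor,
     (fst nz < fst nz')%nat /\ agree (fst nz) (snd nz) (snd nz') /\
     forall u, agree (fst nz') (snd nz') u -> ~ F k u).
  { intros k [n z]. simpl.
    destruct (compat2 d Hc z n) as [r [Hr Hr2]].
    destruct (HF k z r Hr) as [w [r' [H1 [H2 H3]]]].
    destruct (compat1 d Hc w r' H1) as [N HN].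
    exists (Nat.max N (S n), w). simpl. split. lia. split.
    apply Hr2. apply H2. rewrite (d_refl d Hc). auto.
    intros u Hu. apply H3. apply HN. apply agree_mono with (Nat.max N (S n)). lia. auto. }
  destruct (HW x0 Hx0) as [r0 [Hr0 Hr0']].
  destruct (compat1 d Hc x0 r0 Hr0) as [N0 HN0].
  set (stp := fun k nz => epsilon (inhabits nz) (fun nz' : nat * Cantor =>
     (fst nz < fst nz')%nat /\ agree (fst nz) (snd nz) (snd nz') /\
     forall u, agree (fst nz') (snd nz') u -> ~ F k u)).
  set (ch := fix ch (j : nat) : nat * Cantor := match j with O => (N0, x0) | S j' => stp j' (ch j') end).
  assert (Hspec : forall j, (fst (ch j) < fst (ch (S j)))%nat /\ agree (fst (ch j)) (snd (ch j)) (snd (ch (S j))) /\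
     forall u, agree (fst (ch (S j))) (snd (ch (S j))) u -> ~ F j u).
  { intro j. simpl. unfold stp. apply (epsilon_spec (inhabits (ch j)) (fun nz' : nat * Cantor =>
     (fst (ch j) < fst nz')%nat /\ agree (fst (ch j)) (snd (ch j)) (snd nz') /\
     forall u, agree (fst nz') (snd nz') u -> ~ F j u)). apply Hstep. }
  assert (Hge : forall j, (j <= fst (ch j))%nat).
  { induction j. lia. pose proof (proj1 (Hspec j)). lia. }
  pose proof (chain_limit (fun j => fst (ch j)) (fun j => snd (ch j)) Hge
     (fun j => Nat.lt_le_incl _ _ (proj1 (Hspec j))) (fun j => proj1 (proj2 (Hspec j)))) as Hlim.
  simpl in Hlim.
  eexists. split.
  - apply Hr0'. apply HN0. apply (Hlim 0%nat).
  - intros k. apply (proj2 (proj2 (Hspec k))). apply (Hlim (S k)).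
Qed.

End Rec.

Section Cont.
Variable dl : Cantor -> Cantor -> R.

Definition dcont (f : Cantor -> R) : Prop :=
  forall z e, 0 < e -> exists r, 0 < r /\ forall w, dl z w < r -> Rabs (f w - f z) < e.

Lemma dcont_const c : dcont (fun _ => c).
Proof. intros z e He. exists 1. split. lra. intros w _. rewrite Rminus_diag, Rabs_R0. auto. Qed.

Lemma dcont_plus f g : dcont f -> dcont g -> dcont (fun z => f z + g z).
Proof.
  intros Hf Hg z e He.
  destruct (Hf z (e/2)) as [r1 [Hr1 H1]]. lra.
  destruct (Hg z (e/2)) as [r2 [Hr2 H2]]. lra.
  exists (Rmin r1 r2). split. apply Rmin_pos; auto.
  intros w Hw. pose proof (Rmin_l r1 r2). pose proof (Rmin_r r1 r2).
  specialize (H1 w ltac:(lra)). specialize (H2 w ltac:(lra)).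
  apply Rabs_def2 in H1. apply Rabs_def2 in H2. apply Rabs_def1; lra.
Qed.

Lemma dcont_scal c f : dcont f -> dcont (fun z => c * f z).
Proof.
  intros Hf z e He.
  destruct (Hf z (e / (Rabs c + 1))) as [r [Hr H]].
  apply Rdiv_lt_0_compat; auto. pose proof (Rabs_pos c); lra.
  exists r. split; auto. intros w Hw.
  replace (c * f w - c * f z) with (c * (f w - f z)) by ring.
  rewrite Rabs_mult. specialize (H w Hw).
  pose proof (Rabs_pos c). pose proof (Rabs_pos (f w - f z)).
  assert (Rabs c * Rabs (f w - f z) <= Rabs c * (e / (Rabs c + 1))).
  { apply Rmult_le_compat_l; lra. }
  assert (Rabs c * (e / (Rabs c + 1)) < e).
  { apply Rmult_lt_reg_r with (Rabs c + 1). lra.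
    field_simplify. lra. lra. }
  lra.
Qed.

Lemma Rmax_close a b a' b' e : Rabs (a' - a) < e -> Rabs (b' - b) < e -> Rabs (Rmax a' b' - Rmax a b) < e.
Proof.
  intros H1 H2. apply Rabs_def2 in H1. apply Rabs_def2 in H2. apply Rabs_def1;
  unfold Rmax; destruct (Rle_dec a' b'); destruct (Rle_dec a b); lra.
Qed.
Lemma Rmin_close a b a' b' e : Rabs (a' - a) < e -> Rabs (b' - b) < e -> Rabs (Rmin a' b' - Rmin a b) < e.
Proof.
  intros H1 H2. apply Rabs_def2 in H1. apply Rabs_def2 in H2. apply Rabs_def1;
  unfold Rmin; destruct (Rle_dec a' b'); destruct (Rle_dec a b); lra.
Qed.

Lemma dcont_max f g : dcont f -> dcont g -> dcont (fun z => Rmax (f z) (g z)).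
Proof.
  intros Hf Hg z e He.
  destruct (Hf z e He) as [r1 [Hr1 H1]]. destruct (Hg z e He) as [r2 [Hr2 H2]].
  exists (Rmin r1 r2). split. apply Rmin_pos; auto.
  intros w Hw. pose proof (Rmin_l r1 r2). pose proof (Rmin_r r1 r2).
  apply Rmax_close; [apply H1|apply H2]; lra.
Qed.
Lemma dcont_min f g : dcont f -> dcont g -> dcont (fun z => Rmin (f z) (g z)).
Proof.
  intros Hf Hg z e He.
  destruct (Hf z e He) as [r1 [Hr1 H1]]. destruct (Hg z e He) as [r2 [Hr2 H2]].
  exists (Rmin r1 r2). split. apply Rmin_pos; auto.
  intros w Hw. pose proof (Rmin_l r1 r2). pose proof (Rmin_r r1 r2).
  apply Rmin_close; [apply H1|apply H2]; lra.
Qed.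

Lemma dcont_ext f g : (forall z, f z = g z) -> dcont f -> dcont g.
Proof. intros E Hf z e He. destruct (Hf z e He) as [r [Hr H]]. exists r. split; auto. intros w Hw. rewrite <- !E. auto. Qed.

Lemma dcont_lt f z c : dcont f -> f z < c -> exists r, 0 < r /\ forall w, dl z w < r -> f w < c.
Proof.
  intros Hf Hz. destruct (Hf z (c - f z)) as [r [Hr H]]. lra.
  exists r. split; auto. intros w Hw. specialize (H w Hw). apply Rabs_def2 in H. lra.
Qed.
Lemma dcont_gt f z c : dcont f -> c < f z -> exists r, 0 < r /\ forall w, dl z w < r -> c < f w.
Proof.
  intros Hf Hz. destruct (Hf z (f z - c)) as [r [Hr H]]. lra.
  exists r. split; auto. intros w Hw. specialize (H w Hw). apply Rabs_def2 in H. lra.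
Qed.
End Cont.

Lemma dcont_weaken (d1 d2 : Cantor -> Cantor -> R) f : (forall x y, d2 x y <= d1 x y) -> dcont d2 f -> dcont d1 f.
Proof. intros Hle Hf z e He. destruct (Hf z e He) as [r [Hr H]]. exists r. split; auto. intros w Hw. apply H. pose proof (Hle z w). lra. Qed.

Record st := mkst { stA : Cantor -> R; stB : Cantor -> R; stP : list Cantor }.

Definition zc (c : nat) : Cantor := fun i => Nat.testbit c i.
Definition sR (i e : nat) : R := INR i / 2 ^ (e + 2) - 1.
Definition etaR (e : nat) : R := / 2 ^ e.

Definition req (m : nat) : nat * nat * nat * nat * nat :=
  let (m1, m2) := Cantor.of_nat m in
  let (N, c) := Cantor.of_nat m1 in
  let (m3, e) := Cantor.of_nat m2 in
  let (i, j) := Cantor.of_nat m3 in (N, c, i, j, e).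

Definition req_code (N c i j e : nat) : nat :=
  Cantor.to_nat (Cantor.to_nat (N, c), Cantor.to_nat (Cantor.to_nat (i, j), e)).

Lemma req_code_spec N c i j e : req (req_code N c i j e) = (N, c, i, j, e).
Proof. unfold req, req_code. rewrite !Cantor.cancel_of_to. reflexivity. Qed.

Section Construct.
Variable d : Cantor -> Cantor -> R.
Variable h : Cantor -> Cantor.
Variable K : nat -> Cantor -> Prop.

Let dl := delta d h.

Definition phi (y : Cantor) (rho : R) (z : Cantor) : R := Rmax 0 (1 + (- / rho) * dl z y).

Definition psi (P : list Cantor) (mu : R) (k : nat) (z : Cantor) : R :=
  fold_right (fun p acc => Rmax acc (1 + (- / mu) * dl z p)) (/ 2 ^ (S k)) P.

Definition goodY (S : st) N c s t eta y : Prop :=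
  agree N (zc c) y /\ stA S y < s + eta /\ t - eta < stB S y /\ stA S y < t /\ s < stB S y /\ s < t /\
  (forall n, ~ K n y) /\ (forall p, In p (stP S) -> 0 < dl y p).

Definition goodRho (S : st) (y : Cantor) (s t rho : R) : Prop :=
  0 < rho /\ (forall p, In p (stP S) -> rho <= dl p y) /\
  (forall z, dl z y < rho -> stA S z < t /\ s < stB S z).

Definition push (S : st) (m : nat) : st :=
  match req m with (N, c, i, j, e) =>
  let s := sR i e in let t := sR j e in let eta := etaR e in
  match excluded_middle_informative (exists y, goodY S N c s t eta y) with
  | left _ =>
    let y := epsilon (inhabits (fun _ => true)) (goodY S N c s t eta) in
    let rho := epsilon (inhabits 1) (goodRho S y s t) in
    mkst (fun z => Rmax (stA S z) (s * phi y rho z))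
         (fun z => Rmin (stB S z) (1 - (1 - t) * phi y rho z)) (y :: stP S)
  | right _ => S
  end end.

Definition goodMu (S : st) (n : nat) (mu : R) : Prop :=
  0 < mu /\ forall p w, In p (stP S) -> K n w -> mu <= dl p w.

Definition collapse (S : st) (m : nat) : st :=
  let (n, k) := Cantor.of_nat m in
  let mu := epsilon (inhabits 1) (goodMu S n) in
  mkst (fun z => Rmax (stA S z) ((stA S z + stB S z) / 2 - psi (stP S) mu k z))
       (fun z => Rmin (stB S z) ((stA S z + stB S z) / 2 + psi (stP S) mu k z)) (stP S).

Definition step (S : st) (m : nat) : st := collapse (push S m) m.

Fixpoint stage (m : nat) : st :=
  match m with O => mkst (fun _ => 0) (fun _ => 1) nil | S m' => step (stage m') m' end.

End Construct.

Lemma list_min_pos (f : Cantor -> R) (P : list Cantor) r : 0 < r -> (forall p, In p P -> 0 < f p) ->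
  exists rho, 0 < rho /\ rho <= r /\ forall p, In p P -> rho <= f p.
Proof.
  intros Hr. induction P as [|p P IH]; intros HP.
  - exists r. split; auto. split. lra. intros p [].
  - destruct IH as [rho [H1 [H2 H3]]]. intros q Hq; apply HP; right; auto.
    exists (Rmin rho (f p)). split. apply Rmin_pos; auto. apply HP; left; auto.
    split. pose proof (Rmin_l rho (f p)). lra.
    intros q [<-|Hq]. apply Rmin_r. eapply Rle_trans. apply Rmin_l. auto.
Qed.

Section Props.
Variable d : Cantor -> Cantor -> R.
Variable h : Cantor -> Cantor.
Variable K : nat -> Cantor -> Prop.
Hypothesis Hc : compatible_metric d.
Hypothesis Hiso : isometry d h.

Local Notation dl := (delta d h).

Definition Inv (S : st) : Prop :=
  (forall z, 0 <= stA S z /\ stA S z < stB S z /\ stB S z <= 1) /\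
  dcont dl (stA S) /\ dcont dl (stB S) /\ (forall p, In p (stP S) -> forall n, ~ K n p).

Lemma dl_sym x y : dl x y = dl y x.
Proof. apply delta_sym; auto. Qed.
Lemma dl_nonneg x y : 0 <= dl x y.
Proof. apply delta_nonneg; auto. Qed.
Lemma dl_refl x : dl x x = 0.
Proof. apply delta_refl; auto. Qed.

Lemma dcont_dl y : dcont dl (fun z => dl z y).
Proof.
  intros z e He. exists e. split; auto. intros w Hw.
  pose proof (delta_lip d h Hc Hiso w z y). rewrite (dl_sym w z) in H. lra.
Qed.

Lemma dcont_phi y rho : dcont dl (phi d h y rho).
Proof.
  unfold phi. apply dcont_max. apply dcont_const.
  apply dcont_plus. apply dcont_const. apply dcont_scal. apply dcont_dl.
Qed.

Lemma phi_range y rho z : 0 < rho -> 0 <= phi d h y rho z <= 1.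
Proof.
  intros Hr. unfold phi. pose proof (dl_nonneg z y).
  assert (0 <= / rho * dl z y) by (apply Rmult_le_pos; [left; apply Rinv_0_lt_compat; auto | auto]).
  split. apply Rmax_l. apply Rmax_lub; lra.
Qed.
Lemma phi_center y rho : phi d h y rho y = 1.
Proof. unfold phi. rewrite dl_refl. rewrite Rmult_0_r, Rplus_0_r. apply Rmax_right. lra. Qed.
Lemma phi_far y rho z : 0 < rho -> rho <= dl z y -> phi d h y rho z = 0.
Proof.
  intros Hr Hz. unfold phi. apply Rmax_left.
  assert (1 <= / rho * dl z y).
  { apply Rmult_le_reg_l with rho; auto. rewrite <- Rmult_assoc, Rinv_r. lra. lra. }
  lra.
Qed.
Lemma phi_pos y rho z : 0 < rho -> 0 < phi d h y rho z -> dl z y < rho.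
Proof.
  intros Hr Hp. destruct (Rlt_or_le (dl z y) rho); auto.
  rewrite phi_far in Hp; auto. lra.
Qed.

Lemma dcont_psi P mu k : dcont dl (psi d h P mu k).
Proof.
  induction P as [|p P IH]; simpl. apply dcont_const.
  apply dcont_max. exact IH. apply dcont_plus. apply dcont_const. apply dcont_scal. apply dcont_dl.
Qed.
Lemma psi_ge P mu k z : / 2 ^ (S k) <= psi d h P mu k z.
Proof. induction P as [|p P IH]; simpl. lra. eapply Rle_trans. apply IH. apply Rmax_l. Qed.
Lemma psi_pos P mu k z : 0 < psi d h P mu k z.
Proof. eapply Rlt_le_trans. 2: apply psi_ge. apply Rinv_0_lt_compat. apply pow_lt. lra. Qed.
Lemma psi_in P mu k p : In p P -> 1 <= psi d h P mu k p.
Proof.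
  induction P as [|q P IH]; simpl. intros [].
  intros [->|Hp]. eapply Rle_trans. 2: apply Rmax_r. rewrite dl_refl. lra.
  eapply Rle_trans. apply IH; auto. apply Rmax_l.
Qed.
Lemma psi_far P mu k z : 0 < mu -> (forall p, In p P -> mu <= dl p z) -> psi d h P mu k z = / 2 ^ (S k).
Proof.
  intros Hmu. induction P as [|q P IH]; simpl; intros HP. reflexivity.
  rewrite IH. apply Rmax_left. rewrite dl_sym.
  assert (1 <= / mu * dl q z).
  { apply Rmult_le_reg_l with mu; auto. rewrite <- Rmult_assoc, Rinv_r. rewrite Rmult_1_l, Rmult_1_r. apply HP. left; auto. lra. }
  pose proof (pow_lt 2 k ltac:(lra)). assert (0 < / (2 * 2 ^ k)) by (apply Rinv_0_lt_compat; lra). assert (E: - / mu * dl q z = - (/ mu * dl q z)) by ring. lra.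
  intros p Hp; apply HP; right; auto.
Qed.


Lemma push_num (A B s t f : R) : 0 <= A -> A < B -> B <= 1 -> 0 <= f <= 1 ->
  (0 < f -> A < t /\ s < B) -> s < t ->
  0 <= Rmax A (s * f) /\ Rmax A (s * f) < Rmin B (1 - (1 - t) * f) /\ Rmin B (1 - (1 - t) * f) <= 1.
Proof.
  intros H1 H2 H3 [H4 H5] H6 H7.
  split. eapply Rle_trans. 2: apply Rmax_l. auto.
  split. 2: eapply Rle_trans; [apply Rmin_l| auto].
  destruct (Rle_lt_or_eq_dec 0 f H4) as [Hf|Hf].
  - destruct (H6 Hf) as [Ha Hb].
    apply Rmax_lub_lt; apply Rmin_glb_lt.
    + auto.
    + destruct (Rle_or_lt t 1). nra. nra.
    + destruct (Rle_or_lt s 0). nra. nra.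
    + destruct (Rle_or_lt (s + 1 - t) 0). nra. nra.
  - subst f. rewrite !Rmult_0_r. apply Rmax_lub_lt; apply Rmin_glb_lt; lra.
Qed.

Lemma coll_num (A B p : R) : 0 <= A -> A < B -> B <= 1 -> 0 < p ->
  0 <= Rmax A ((A + B) / 2 - p) /\ Rmax A ((A + B) / 2 - p) < Rmin B ((A + B) / 2 + p) /\
  Rmin B ((A + B) / 2 + p) <= 1.
Proof.
  intros. split. eapply Rle_trans. 2: apply Rmax_l. auto.
  split. apply Rmax_lub_lt; apply Rmin_glb_lt; lra.
  eapply Rle_trans; [apply Rmin_l| auto].
Qed.

Lemma rho_exists S N c s t eta y : Inv S -> goodY d h K S N c s t eta y -> exists rho, goodRho d h S y s t rho.
Proof.
  intros [HI1 [HI2 [HI3 HI4]]] [G1 [G2 [G3 [G4 [G5 [G6 [G7 G8]]]]]]].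
  destruct (dcont_lt dl (stA S) y t HI2 G4) as [r1 [Hr1 H1]].
  destruct (dcont_gt dl (stB S) y s HI3 G5) as [r2 [Hr2 H2]].
  destruct (list_min_pos (fun p => dl p y) (stP S) (Rmin r1 r2)) as [rho [Hrho [Hrho2 Hrho3]]].
  apply Rmin_pos; auto. intros p Hp. rewrite dl_sym. apply G8; auto.
  exists rho. split; auto. split; auto.
  intros z Hz. pose proof (Rmin_l r1 r2). pose proof (Rmin_r r1 r2).
  split; [apply H1|apply H2]; rewrite dl_sym; lra.
Qed.

Lemma push_spec S m N c i j e : req m = (N, c, i, j, e) -> Inv S ->
  (push d h K S m = S /\ ~ exists y, goodY d h K S N c (sR i e) (sR j e) (etaR e) y) \/
  (exists y rho, goodY d h K S N c (sR i e) (sR j e) (etaR e) y /\ goodRho d h S y (sR i e) (sR j e) rho /\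
    push d h K S m = mkst (fun z => Rmax (stA S z) (sR i e * phi d h y rho z))
         (fun z => Rmin (stB S z) (1 - (1 - sR j e) * phi d h y rho z)) (y :: stP S)).
Proof.
  intros Hr HI. unfold push. rewrite Hr.
  destruct (excluded_middle_informative _) as [Hex|Hn].
  - right. set (y := epsilon _ _).
    assert (Hy : goodY d h K S N c (sR i e) (sR j e) (etaR e) y) by (apply epsilon_spec; auto).
    set (rho := epsilon _ _).
    assert (Hrho : goodRho d h S y (sR i e) (sR j e) rho).
    { apply epsilon_spec. apply rho_exists with N c (etaR e); auto. }
    exists y, rho. auto.
  - left. auto.
Qed.

Lemma push_inv S m : Inv S -> Inv (push d h K S m).
Proof.
  intros HI. destruct (req m) as [[[[N c] i] j] e] eqn:Hr.
  destruct (push_spec S m N c i j e Hr HI) as [[-> _]|[y [rho [Hy [Hrho ->]]]]]; auto.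
  destruct HI as [HI1 [HI2 [HI3 HI4]]]. destruct Hrho as [R1 [R2 R3]].
  split; [|split; [|split]]; simpl.
  - intros z. destruct (HI1 z) as [Z1 [Z2 Z3]].
    apply push_num; auto. apply phi_range; auto.
    intros Hf. apply R3. apply phi_pos in Hf; auto.
    apply Hy.
  - apply dcont_max; auto. apply dcont_scal. apply dcont_phi.
  - apply dcont_min; auto. apply dcont_plus. apply dcont_const.
    apply dcont_ext with (fun z => (- (1 - sR j e)) * phi d h y rho z). intros; ring.
    apply dcont_scal. apply dcont_phi.
  - intros p [<-|Hp]. apply Hy. auto.
Qed.

Lemma collapse_inv S m : Inv S -> Inv (collapse d h K S m).
Proof.
  intros [HI1 [HI2 [HI3 HI4]]]. unfold collapse. destruct (Cantor.of_nat m) as [n k].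
  split; [|split; [|split]]; simpl.
  - intros z. destruct (HI1 z) as [Z1 [Z2 Z3]]. apply coll_num; auto. apply psi_pos.
  - apply dcont_max; auto.
    apply dcont_ext with (fun z => / 2 * stA S z + / 2 * stB S z + (-1) * psi d h (stP S) (epsilon (inhabits 1) (goodMu d h K S n)) k z).
    intros; field.
    repeat apply dcont_plus; try apply dcont_scal; auto. apply dcont_psi.
  - apply dcont_min; auto.
    apply dcont_ext with (fun z => / 2 * stA S z + / 2 * stB S z + 1 * psi d h (stP S) (epsilon (inhabits 1) (goodMu d h K S n)) k z).
    intros; field.
    repeat apply dcont_plus; try apply dcont_scal; auto. apply dcont_psi.
  - auto.
Qed.

Lemma stage_inv m : Inv (stage d h K m).
Proof.
  induction m; simpl.
  - split; [|split; [|split]]; simpl. intros; lra. apply dcont_const. apply dcont_const. intros p [].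
  - unfold step. apply collapse_inv, push_inv; auto.
Qed.


Lemma push_mono S m z : Inv S -> stA S z <= stA (push d h K S m) z /\ stB (push d h K S m) z <= stB S z.
Proof.
  intros HI. destruct (req m) as [[[[N c] i] j] e] eqn:Hr.
  destruct (push_spec S m N c i j e Hr HI) as [[-> _]|[y [rho [Hy [Hrho ->]]]]]; simpl.
  lra. split. apply Rmax_l. apply Rmin_l.
Qed.
Lemma collapse_mono S m z : stA S z <= stA (collapse d h K S m) z /\ stB (collapse d h K S m) z <= stB S z.
Proof. unfold collapse. destruct (Cantor.of_nat m). simpl. split. apply Rmax_l. apply Rmin_l. Qed.
Lemma step_mono S m z : Inv S -> stA S z <= stA (step d h K S m) z /\ stB (step d h K S m) z <= stB S z.
Proof.
  intros HI. unfold step. pose proof (push_mono S m z HI). pose proof (collapse_mono (push d h K S m) m z). lra.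
Qed.

Lemma push_keep S m p : Inv S -> In p (stP S) ->
  stA (push d h K S m) p = stA S p /\ stB (push d h K S m) p = stB S p /\ In p (stP (push d h K S m)).
Proof.
  intros HI Hp. destruct (req m) as [[[[N c] i] j] e] eqn:Hr.
  destruct (push_spec S m N c i j e Hr HI) as [[-> _]|[y [rho [Hy [Hrho ->]]]]]; simpl. auto.
  destruct Hrho as [R1 [R2 R3]]. rewrite phi_far; auto.
  destruct HI as [HI1 _]. destruct (HI1 p) as [Z1 [Z2 Z3]].
  rewrite Rmult_0_r, Rmult_0_r, Rminus_0_r.
  split. apply Rmax_left. lra. split. apply Rmin_left. lra. right; auto.
Qed.
Lemma collapse_keep S m p : Inv S -> In p (stP S) ->
  stA (collapse d h K S m) p = stA S p /\ stB (collapse d h K S m) p = stB S p /\ In p (stP (collapse d h K S m)).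
Proof.
  intros HI Hp. unfold collapse. destruct (Cantor.of_nat m) as [n k]. simpl.
  destruct HI as [HI1 _]. destruct (HI1 p) as [Z1 [Z2 Z3]].
  pose proof (psi_in (stP S) (epsilon (inhabits 1) (goodMu d h K S n)) k p Hp).
  split. apply Rmax_left. lra. split. apply Rmin_left. lra. auto.
Qed.
Lemma step_keep S m p : Inv S -> In p (stP S) ->
  stA (step d h K S m) p = stA S p /\ stB (step d h K S m) p = stB S p /\ In p (stP (step d h K S m)).
Proof.
  intros HI Hp. unfold step. destruct (push_keep S m p HI Hp) as [E1 [E2 E3]].
  destruct (collapse_keep (push d h K S m) m p (push_inv S m HI) E3) as [F1 [F2 F3]].
  rewrite F1, F2, E1, E2. auto.
Qed.

Hypothesis HKc : forall n, mclosed d (K n).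
Hypothesis HKi : forall n x, K n x <-> K n (h x).

Lemma collapse_K Q m n k w : Inv Q -> Cantor.of_nat m = (n, k) -> K n w ->
  stB (collapse d h K Q m) w - stA (collapse d h K Q m) w <= 2 * / 2 ^ (S k).
Proof.
  intros HI Hm Hw. unfold collapse. rewrite Hm. cbn [stA stB stP].
  assert (Hmu : goodMu d h K Q n (epsilon (inhabits 1) (goodMu d h K Q n))).
  { apply epsilon_spec. destruct HI as [_ [_ [_ HI4]]].
    destruct (mu_exists_list d h Hc Hiso (K n) (stP Q) (HKc n) (HKi n)) as [mu [Hm1 Hm2]].
    intros p Hp. apply HI4; auto. exists mu. split; auto. }
  destruct Hmu as [Hm1 Hm2].
  rewrite psi_far; auto.
  pose proof (Rmax_r (stA Q w) ((stA Q w + stB Q w) / 2 - / 2 ^ S k)).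
  pose proof (Rmin_r (stB Q w) ((stA Q w + stB Q w) / 2 + / 2 ^ S k)). lra.
Qed.

Lemma stage_mono m m' z : (m <= m')%nat ->
  stA (stage d h K m) z <= stA (stage d h K m') z /\ stB (stage d h K m') z <= stB (stage d h K m) z.
Proof.
  intros H. induction H. lra. simpl. pose proof (step_mono (stage d h K m0) m0 z (stage_inv m0)). lra.
Qed.
Lemma stage_keep m m' p : (m <= m')%nat -> In p (stP (stage d h K m)) ->
  stA (stage d h K m') p = stA (stage d h K m) p /\ stB (stage d h K m') p = stB (stage d h K m) p /\
  In p (stP (stage d h K m')).
Proof.
  intros H Hp. induction H. auto. destruct IHle as [E1 [E2 E3]].
  simpl. destruct (step_keep (stage d h K m0) m0 p (stage_inv m0) E3) as [F1 [F2 F3]].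
  rewrite F1, F2. auto.
Qed.
Lemma stage_AB m m' z : stA (stage d h K m) z < stB (stage d h K m') z.
Proof.
  pose proof (stage_mono m (Nat.max m m') z ltac:(lia)).
  pose proof (stage_mono m' (Nat.max m m') z ltac:(lia)).
  destruct (stage_inv (Nat.max m m')) as [HI _]. destruct (HI z). lra.
Qed.
Lemma stage_K m n k w : Cantor.of_nat m = (n, k) -> K n w ->
  stB (stage d h K (S m)) w - stA (stage d h K (S m)) w <= 2 * / 2 ^ (S k).
Proof.
  intros Hm Hw. cbn [stage]. unfold step. apply collapse_K with n; auto. apply push_inv. apply stage_inv.
Qed.

End Props.

Lemma pow2_small x : 0 < x -> exists k, / 2 ^ k < x.
Proof.
  intros Hx. destruct (archimed (/ x)) as [H1 _].
  assert (Hpos : (0 < up (/ x))%Z). { apply lt_IZR. pose proof (Rinv_0_lt_compat x Hx). simpl. lra. }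
  exists (Z.to_nat (up (/ x))).
  assert (Hk : forall k, INR k < 2 ^ k).
  { induction k. simpl; lra. rewrite S_INR. simpl. assert (1 <= 2 ^ k) by (apply pow_R1_Rle; lra). lra. }
  specialize (Hk (Z.to_nat (up (/ x)))). rewrite INR_IZR_INZ, Z2Nat.id in Hk by lia.
  assert (/ x < 2 ^ Z.to_nat (up (/ x))) by lra.
  apply Rmult_lt_reg_l with (2 ^ Z.to_nat (up (/ x))). apply pow_lt; lra.
  rewrite Rinv_r. 2: apply pow_nonzero; lra.
  apply Rmult_lt_reg_l with (/ x). apply Rinv_0_lt_compat; auto.
  rewrite Rmult_1_r. rewrite Rmult_comm, Rmult_assoc, Rinv_r, Rmult_1_r; lra.
Qed.

Section Limits.
Variable d : Cantor -> Cantor -> R.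
Variable h : Cantor -> Cantor.
Variable K : nat -> Cantor -> Prop.
Hypothesis Hc : compatible_metric d.
Hypothesis Hiso : isometry d h.
Local Notation dl := (delta d h).
Local Notation Am m := (stA (stage d h K m)).
Local Notation Bm m := (stB (stage d h K m)).

Definition Lf (z : Cantor) : R := supR (fun v => exists m, v = Am m z).
Definition Uf (z : Cantor) : R := infR (fun v => exists m, v = Bm m z).

Lemma Am_le1 m z : Am m z <= 1.
Proof. destruct (stage_inv d h K Hc Hiso m) as [HI _]. destruct (HI z). lra. Qed.
Lemma Bm_ge0 m z : 0 <= Bm m z.
Proof. destruct (stage_inv d h K Hc Hiso m) as [HI _]. destruct (HI z). lra. Qed.

Lemma L_ge m z : Am m z <= Lf z.
Proof. apply supR_ub with 1. intros v [m' ->]. apply Am_le1. eauto. Qed.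
Lemma L_le m z : Lf z <= Bm m z.
Proof.
  apply supR_le with 1. exists (Am 0 z). eauto. intros v [m' ->]. apply Am_le1.
  intros v [m' ->]. left. apply stage_AB; auto.
Qed.
Lemma U_le m z : Uf z <= Bm m z.
Proof. apply infR_lb with 0. intros v [m' ->]. apply Bm_ge0. eauto. Qed.
Lemma U_ge m z : Am m z <= Uf z.
Proof.
  apply infR_ge with 0. exists (Bm 0 z). eauto. intros v [m' ->]. apply Bm_ge0.
  intros v [m' ->]. left. apply stage_AB; auto.
Qed.
Lemma L_le_U z : Lf z <= Uf z.
Proof.
  apply infR_ge with 0. exists (Bm 0 z). eauto. intros v [m' ->]. apply Bm_ge0.
  intros v [m' ->]. apply L_le.
Qed.
Lemma L_range z : 0 <= Lf z <= 1.
Proof. pose proof (L_ge 0 z). pose proof (L_le 0 z). simpl in *. lra. Qed.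
Lemma U_range z : 0 <= Uf z <= 1.
Proof. pose proof (U_ge 0 z). pose proof (U_le 0 z). simpl in *. lra. Qed.

Lemma L_lsc : lsc d Lf.
Proof.
  intros x eps He.
  destruct (supR_approx (fun v => exists m, v = Am m x) 1 (eps/2)) as [v [[m ->] Hv]].
  exists (Am 0 x); eauto. intros v [m' ->]. apply Am_le1. lra.
  destruct (stage_inv d h K Hc Hiso m) as [_ [HA _]].
  destruct (HA x (eps/2)) as [r [Hr Hr2]]. lra.
  exists r. split; auto. intros y Hy.
  assert (dl x y < r) by (pose proof (delta_le_d d h Hc x y); lra).
  specialize (Hr2 y H). apply Rabs_def2 in Hr2. pose proof (L_ge m y). fold (Lf x) in Hv. lra.
Qed.
Lemma U_usc : usc d Uf.
Proof.
  intros x eps He.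
  destruct (infR_approx (fun v => exists m, v = Bm m x) 0 (eps/2)) as [v [[m ->] Hv]].
  exists (Bm 0 x); eauto. intros v [m' ->]. apply Bm_ge0. lra.
  destruct (stage_inv d h K Hc Hiso m) as [_ [_ [HB _]]].
  destruct (HB x (eps/2)) as [r [Hr Hr2]]. lra.
  exists r. split; auto. intros y Hy.
  assert (dl x y < r) by (pose proof (delta_le_d d h Hc x y); lra).
  specialize (Hr2 y H). apply Rabs_def2 in Hr2. pose proof (U_le m y). fold (Uf x) in Hv. lra.
Qed.

Lemma dcont_h f z : dcont dl f -> f (h z) = f z.
Proof.
  intros Hf. apply Rle_antisym; apply Rnot_lt_le; intro Hlt.
  - destruct (Hf z (f (h z) - f z)) as [r [Hr H]]. lra.
    specialize (H (h z)). rewrite (delta_sym d h Hc), (delta_h d h Hc Hiso), (delta_refl d h Hc) in H.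
    specialize (H Hr). apply Rabs_def2 in H. lra.
  - destruct (Hf z (f z - f (h z))) as [r [Hr H]]. lra.
    specialize (H (h z)). rewrite (delta_sym d h Hc), (delta_h d h Hc Hiso), (delta_refl d h Hc) in H.
    specialize (H Hr). apply Rabs_def2 in H. lra.
Qed.

Lemma Am_h m z : Am m (h z) = Am m z.
Proof. destruct (stage_inv d h K Hc Hiso m) as [_ [HA _]]. apply dcont_h; auto. Qed.
Lemma Bm_h m z : Bm m (h z) = Bm m z.
Proof. destruct (stage_inv d h K Hc Hiso m) as [_ [_ [HB _]]]. apply dcont_h; auto. Qed.

Lemma L_h z : Lf (h z) = Lf z.
Proof.
  unfold Lf. f_equal. apply functional_extensionality. intro v.
  apply propositional_extensionality. split; intros [m ->]; exists m; rewrite Am_h; auto.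
Qed.
Lemma U_h z : Uf (h z) = Uf z.
Proof.
  unfold Uf. f_equal. apply functional_extensionality. intro v.
  apply propositional_extensionality. split; intros [m ->]; exists m; rewrite Bm_h; auto.
Qed.

Lemma L_prot m p : In p (stP (stage d h K m)) -> Lf p = Am m p.
Proof.
  intros Hp. apply Rle_antisym. 2: apply L_ge.
  apply supR_le with 1. exists (Am 0 p); eauto. intros v [m' ->]. apply Am_le1.
  intros v [m' ->]. destruct (le_lt_dec m' m).
  apply stage_mono; auto. right. apply stage_keep; auto. lia.
Qed.
Lemma U_prot m p : In p (stP (stage d h K m)) -> Uf p = Bm m p.
Proof.
  intros Hp. apply Rle_antisym. apply U_le.
  apply infR_ge with 0. exists (Bm 0 p); eauto. intros v [m' ->]. apply Bm_ge0.
  intros v [m' ->]. destruct (le_lt_dec m' m).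
  apply stage_mono; auto. right. symmetry. apply stage_keep; auto. lia.
Qed.

Hypothesis HKc : forall n, mclosed d (K n).
Hypothesis HKi : forall n x, K n x <-> K n (h x).

Lemma LU_K n w : K n w -> Lf w = Uf w.
Proof.
  intros Hw. apply Rle_antisym. apply L_le_U. apply Rnot_lt_le. intro Hlt.
  destruct (pow2_small (Uf w - Lf w)) as [k Hk]. lra.
  pose proof (stage_K d h K Hc Hiso HKc HKi (Cantor.to_nat (n, k)) n k w (Cantor.cancel_of_to _) Hw).
  pose proof (U_le (S (Cantor.to_nat (n, k))) w). pose proof (L_ge (S (Cantor.to_nat (n, k))) w).
  assert (2 * / 2 ^ S k = / 2 ^ k). { simpl. field. apply pow_nonzero. lra. }
  lra.
Qed.

End Limits.

Lemma zc_exists N x : exists c, agree N (zc c) x.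
Proof.
  revert x. induction N; intros x.
  - exists 0%nat. intros i Hi. lia.
  - destruct (IHN (fun i => x (S i))) as [c Hc].
    exists (2 * c + Nat.b2n (x 0%nat))%nat. intros i Hi. unfold zc.
    destruct i.
    + change (Nat.odd (2 * c + Nat.b2n (x 0%nat)) = x 0%nat).
      destruct (x 0%nat); [apply Nat.odd_odd|]. change (Nat.odd (2 * c + 0) = false). rewrite Nat.add_0_r. apply Nat.odd_even.
    + change (Nat.testbit (2 * c + Nat.b2n (x 0%nat)) (S i)) with (Nat.testbit (Nat.div2 (2 * c + Nat.b2n (x 0%nat))) i).
      assert (E : Nat.div2 (2 * c + Nat.b2n (x 0%nat)) = c).
      { destruct (x 0%nat). apply Nat.div2_odd'. change (Nat.div2 (2 * c + 0) = c). rewrite Nat.add_0_r. apply Nat.div2_even. }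
      rewrite E. apply (Hc i). lia.
Qed.

Lemma grid a step : 0 <= a -> 0 < step -> exists i : nat, a < INR i * step <= a + step.
Proof.
  intros Ha Hs. destruct (archimed (a / step)) as [H1 H2].
  assert (Hq : 0 <= a / step) by (unfold Rdiv; apply Rmult_le_pos; [lra | left; apply Rinv_0_lt_compat; lra]).
  assert (Hpos : (0 < up (a / step))%Z) by (apply lt_IZR; simpl; lra).
  exists (Z.to_nat (up (a / step))). rewrite INR_IZR_INZ, Z2Nat.id by lia.
  set (u := IZR (up (a / step))) in *.
  assert (E : a = (a / step) * step) by (field; lra).
  split.
  - rewrite E at 1. apply Rmult_lt_compat_r; lra.
  - rewrite E at 1. replace (a / step * step + step) with ((a / step + 1) * step) by ring.
    apply Rmult_le_compat_r; lra.
Qed.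

Section Main.
Variable d : Cantor -> Cantor -> R.
Variable h : Cantor -> Cantor.
Variable K : nat -> Cantor -> Prop.
Hypothesis Hc : compatible_metric d.
Hypothesis Hiso : isometry d h.
Hypothesis Hnd : forall x, nowhere_dense d (orbit h x).
Hypothesis HKc : forall n, mclosed d (K n).
Hypothesis HKi : forall n x, K n x <-> K n (h x).
Hypothesis HKnd : forall n, nowhere_dense d (K n).
Local Notation dl := (delta d h).
Local Notation Am m := (stA (stage d h K m)).
Local Notation Bm m := (stB (stage d h K m)).

Lemma good_exists m N c s t eta x :
  agree N (zc c) x -> Am m x < s + eta -> t - eta < Bm m x -> Am m x < t -> s < Bm m x -> s < t ->
  exists y, goodY d h K (stage d h K m) N c s t eta y.
Proof.
  intros X1 X2 X3 X4 X5 X6.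
  destruct (stage_inv d h K Hc Hiso m) as [HI1 [HI2 [HI3 HI4]]].
  set (W := fun z => agree N (zc c) z /\ Am m z < s + eta /\ t - eta < Bm m z /\ Am m z < t /\ s < Bm m z).
  set (F := fun k z => K k z \/ exists p, In p (stP (stage d h K m)) /\ dl z p = 0).
  assert (HW : forall z, W z -> exists r, 0 < r /\ forall u, d z u < r -> W u).
  { intros z [W1 [W2 [W3 [W4 W5]]]].
    destruct (compat2 d Hc z N) as [r0 [Hr0 Hr0']].
    assert (HA : dcont d (Am m)) by (apply dcont_weaken with dl; auto; intros; apply delta_le_d; auto).
    assert (HB : dcont d (Bm m)) by (apply dcont_weaken with dl; auto; intros; apply delta_le_d; auto).
    destruct (dcont_lt d _ z _ HA W2) as [r1 [Hr1 H1]].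
    destruct (dcont_gt d _ z _ HB W3) as [r2 [Hr2 H2]].
    destruct (dcont_lt d _ z _ HA W4) as [r3 [Hr3 H3]].
    destruct (dcont_gt d _ z _ HB W5) as [r4 [Hr4 H4]].
    exists (Rmin r0 (Rmin r1 (Rmin r2 (Rmin r3 r4)))).
    split. repeat apply Rmin_pos; auto.
    intros u Hu.
    pose proof (Rmin_l r0 (Rmin r1 (Rmin r2 (Rmin r3 r4)))). pose proof (Rmin_r r0 (Rmin r1 (Rmin r2 (Rmin r3 r4)))).
    pose proof (Rmin_l r1 (Rmin r2 (Rmin r3 r4))). pose proof (Rmin_r r1 (Rmin r2 (Rmin r3 r4))).
    pose proof (Rmin_l r2 (Rmin r3 r4)). pose proof (Rmin_r r2 (Rmin r3 r4)).
    pose proof (Rmin_l r3 r4). pose proof (Rmin_r r3 r4).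
    split. apply agree_trans with z; auto. apply Hr0'. lra.
    split. apply H1; lra. split. apply H2; lra. split. apply H3; lra. apply H4; lra. }
  assert (HF : forall k, ND d (F k)).
  { intro k. apply ND_union. apply ND_closed; auto. apply ND_classes; auto. }
  destruct (baire d Hc W F x HW) as [y [[Y1 [Y2 [Y3 [Y4 Y5]]]] Y6]].
  { repeat split; auto. }
  auto.
  exists y. repeat split; auto.
  - intros n Hn. apply (Y6 n). left; auto.
  - intros p Hp. destruct (delta_nonneg d h Hc y p) as [H|H]; auto.
    exfalso. apply (Y6 0%nat). right. exists p. auto.
Qed.

Lemma hit m N c i j e :
  req m = (N, c, i, j, e) -> (exists y, goodY d h K (stage d h K m) N c (sR i e) (sR j e) (etaR e) y) ->
  exists y, goodY d h K (stage d h K m) N c (sR i e) (sR j e) (etaR e) y /\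
    In y (stP (stage d h K (S m))) /\
    Am (S m) y = Rmax (Am m y) (sR i e) /\ Bm (S m) y = Rmin (Bm m y) (sR j e).
Proof.
  intros Hr Hex.
  pose proof (stage_inv d h K Hc Hiso m) as HI.
  destruct (push_spec d h K Hc (stage d h K m) m N c i j e Hr HI) as [[_ Hn]|[y [rho [Hy [Hrho Hp]]]]].
  contradiction.
  exists y. split; auto.
  assert (Hin : In y (stP (push d h K (stage d h K m) m))) by (rewrite Hp; left; auto).
  pose proof (collapse_keep d h K Hc (push d h K (stage d h K m) m) m y (push_inv d h K Hc Hiso _ m HI) Hin) as [E1 [E2 E3]].
  cbn [stage]. unfold step. rewrite E1, E2. split; auto.
  rewrite Hp. cbn [stA stB]. rewrite (phi_center d h Hc). rewrite Rmult_1_r. split; auto.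
  f_equal. ring.
Qed.

End Main.

Section Fr.
Variable d : Cantor -> Cantor -> R.
Variable h : Cantor -> Cantor.
Variable K : nat -> Cantor -> Prop.
Hypothesis Hc : compatible_metric d.
Hypothesis Hiso : isometry d h.
Hypothesis Hnd : forall x, nowhere_dense d (orbit h x).
Hypothesis HKc : forall n, mclosed d (K n).
Hypothesis HKi : forall n x, K n x <-> K n (h x).
Hypothesis HKnd : forall n, nowhere_dense d (K n).
Local Notation dl := (delta d h).
Local Notation Am m := (stA (stage d h K m)).
Local Notation Bm m := (stB (stage d h K m)).
Local Notation L := (Lf d h K).
Local Notation U := (Uf d h K).

Lemma one_req x N c i j e : agree N (zc c) x ->
  L x < sR i e + etaR e -> sR j e - etaR e < U x -> L x < sR j e -> sR i e < U x -> sR i e < sR j e ->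
  exists y, In y (stP (stage d h K (S (req_code N c i j e)))) /\ agree N x y /\
    (forall p, In p (stP (stage d h K (req_code N c i j e))) -> y <> p) /\
    sR i e <= L y < sR i e + etaR e /\ sR j e - etaR e < U y <= sR j e /\ L y < U y.
Proof.
  intros X1 X2 X3 X4 X5 X6.
  set (m := req_code N c i j e).
  pose proof (L_ge d h K Hc Hiso m x). pose proof (U_le d h K Hc Hiso m x).
  destruct (good_exists d h K Hc Hiso Hnd HKc HKnd m N c (sR i e) (sR j e) (etaR e) x) as [y0 Hy0];
    auto; try lra.
  destruct (hit d h K Hc Hiso m N c i j e (req_code_spec N c i j e) (ex_intro _ y0 Hy0))
    as [y [[G1 [G2 [G3 [G4 [G5 [G6 [G7 G8]]]]]]] [Hin [EA EB]]]].
  exists y. split; auto. split.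
  apply agree_trans with (zc c); auto. apply agree_sym; auto.
  split. intros p Hp Heq. subst p. specialize (G8 y Hp). rewrite (delta_refl d h Hc) in G8. lra.
  rewrite (L_prot d h K Hc Hiso (S m) y Hin), (U_prot d h K Hc Hiso (S m) y Hin).
  rewrite EA, EB.
  destruct (stage_inv d h K Hc Hiso (S m)) as [HI _]. destruct (HI y) as [_ [HAB _]].
  rewrite EA, EB in HAB.
  assert (0 < etaR e) by (unfold etaR; apply Rinv_0_lt_compat, pow_lt; lra).
  split. split. apply Rmax_r. apply Rmax_lub_lt; auto. lra.
  split. split. apply Rmin_glb_lt; auto. lra. apply Rmin_r.
  auto.
Qed.

Lemma fraisse_point x s0 t0 eps : L x <= s0 -> s0 <= t0 -> t0 <= U x -> 0 < eps ->
  exists y, y <> x /\ d x y < eps /\ L y < U y /\ Rabs (L y - s0) < eps /\ Rabs (U y - t0) < eps.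
Proof.
  intros H1 H2 H3 He.
  pose proof (L_range d h K Hc Hiso x). pose proof (U_range d h K Hc Hiso x).
  destruct (pow2_small (Rmin eps 1)) as [e He2]. apply Rmin_pos; lra.
  pose proof (Rmin_l eps 1). pose proof (Rmin_r eps 1).
  set (stp := / 2 ^ (e + 2)).
  assert (Hstp : 0 < stp) by (apply Rinv_0_lt_compat, pow_lt; lra).
  assert (Heta : etaR e = 4 * stp).
  { unfold etaR, stp. rewrite pow_add. simpl. field. apply pow_nonzero. lra. }
  assert (Heta1 : etaR e < eps /\ etaR e < 1) by (unfold etaR; lra).
  destruct (grid (s0 - etaR e + 1) stp) as [i [Hi1 Hi2]]; [lra|auto|].
  destruct (grid (t0 + etaR e / 2 + 1) stp) as [j [Hj1 Hj2]]; [lra|auto|].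
  assert (Es : sR i e = INR i * stp - 1) by reflexivity.
  assert (Et : sR j e = INR j * stp - 1) by reflexivity.
  destruct (compat1 d Hc x eps He) as [N HN].
  destruct (zc_exists N x) as [c1 Hc1].
  destruct (zc_exists (S N) x) as [c2 Hc2].
  destruct (one_req x N c1 i j e Hc1) as [y1 [Y1in [Y1a [Y1p [Y1L [Y1U Y1LU]]]]]]; try lra.
  destruct (one_req x (S N) c2 i j e Hc2) as [y2 [Y2in [Y2a [Y2p [Y2L [Y2U Y2LU]]]]]]; try lra.
  assert (Hneq : y1 <> y2).
  { set (m1 := req_code N c1 i j e) in *. set (m2 := req_code (S N) c2 i j e) in *.
    assert (m1 <> m2).
    { intro E. assert (HE : req m1 = req m2) by (rewrite E; auto).
      unfold m1, m2 in HE. rewrite !req_code_spec in HE. inversion HE. lia. }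
    destruct (le_lt_dec m1 m2).
    - intro E. apply (Y2p y1); auto. apply (stage_keep d h K Hc Hiso (S m1) m2); auto; lia.
    - intro E. apply (Y1p y2); auto. apply (stage_keep d h K Hc Hiso (S m2) m1); auto; lia. }
  assert (Close : forall y, agree N x y -> sR i e <= L y < sR i e + etaR e -> sR j e - etaR e < U y <= sR j e ->
     d x y < eps /\ Rabs (L y - s0) < eps /\ Rabs (U y - t0) < eps).
  { intros y Ha HL HU. split. apply HN; auto. split; apply Rabs_def1; lra. }
  destruct (classic (y1 = x)) as [E|E].
  - exists y2. split. intro E2. apply Hneq. congruence.
    destruct (Close y2) as [C1 [C2 C3]]; auto. apply agree_mono with (S N); auto.
  - exists y1. destruct (Close y1) as [C1 [C2 C3]]; auto.
Qed.

End Fr.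

Lemma cont_affine a b x : continuity_pt (fun s => a + s * b) x.
Proof.
  unfold continuity_pt, continue_in, limit1_in, limit_in. intros eps He.
  exists (eps / (Rabs b + 1)). pose proof (Rabs_pos b). split.
  apply Rdiv_lt_0_compat; lra.
  intros y [_ Hy]. simpl in *. unfold R_dist in *.
  replace (a + y * b - (a + x * b)) with ((y - x) * b) by ring.
  rewrite Rabs_mult. pose proof (Rabs_pos (y - x)).
  assert (Rabs (y - x) * Rabs b <= Rabs (y - x) * (Rabs b + 1)) by (apply Rmult_le_compat_l; lra).
  assert (Rabs (y - x) * (Rabs b + 1) < eps).
  { apply Rmult_lt_reg_r with (/ (Rabs b + 1)). apply Rinv_0_lt_compat; lra.
    rewrite Rmult_assoc, Rinv_r by lra. rewrite Rmult_1_r. exact Hy. }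
  lra.
Qed.

Lemma arc_interval l u : l < u -> arcR (fun t => l <= t <= u).
Proof.
  intros Hlu. exists (fun s => l + s * (u - l)). split; [|split].
  - intros s _. apply cont_affine.
  - intros s1 s2 _ _ E. apply Rmult_eq_reg_r with (u - l). lra. lra.
  - intros t. split.
    + intros Ht. exists ((t - l) / (u - l)). split.
      split. apply Rmult_le_pos. lra. left; apply Rinv_0_lt_compat; lra.
      apply Rmult_le_reg_r with (u - l). lra. unfold Rdiv. rewrite Rmult_assoc, Rinv_l by lra. lra.
      field. lra.
    + intros [s [Hs <-]]. split. nra. nra.
Qed.

Lemma continuum_interval I : continuumR I -> exists s0 t0, s0 <= t0 /\ forall t, I t <-> s0 <= t <= t0.
Proof.
  intros [[v Hv] [Hcomp Hconn]].
  destruct (compact_P1 I Hcomp) as [m [M HmM]].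
  pose proof (compact_P2 I Hcomp) as Hcl.
  remember (supR I) as t0 eqn:Et0. remember (infR I) as s0 eqn:Es0.
  assert (Hub : forall t, I t -> t <= t0) by (intros t Ht; rewrite Et0; apply supR_ub with M; auto; intros; apply HmM; auto).
  assert (Hlb : forall t, I t -> s0 <= t) by (intros t Ht; rewrite Es0; apply infR_lb with m; auto; intros; apply HmM; auto).
  assert (Hin : forall w, ~ I w -> exists e, 0 < e /\ forall y, Rabs (y - w) < e -> ~ I y).
  { intros w Hw. destruct (Hcl w Hw) as [[e He] Hinc]. exists e. split; auto. }
  assert (It0 : I t0).
  { apply NNPP. intro Hn. destruct (Hin t0 Hn) as [e [He He2]].
    destruct (supR_approx I M e) as [y [Hy Hy2]]; eauto. intros; apply HmM; auto.
    apply (He2 y); auto. pose proof (Hub y Hy). apply Rabs_def1; lra. }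
  assert (Is0 : I s0).
  { apply NNPP. intro Hn. destruct (Hin s0 Hn) as [e [He He2]].
    destruct (infR_approx I m e) as [y [Hy Hy2]]; eauto. intros; apply HmM; auto.
    apply (He2 y); auto. pose proof (Hlb y Hy). apply Rabs_def1; lra. }
  exists s0, t0. split. apply Hub; auto.
  intros t. split. intros Ht. split; auto.
  intros [Ht1 Ht2]. apply NNPP. intro Hn.
  assert (Hs : s0 < t) by (destruct Ht1; auto; subst; contradiction).
  assert (Ht : t < t0) by (destruct Ht2; auto; subst; contradiction).
  destruct (Hconn (fun y => y < t) (fun y => t < y)) as [z [_ [Z1 Z2]]].
  - intros y Hy. exists (mkposreal (t - y) ltac:(lra)). intros w Hw. unfold disc in Hw. simpl in Hw.
    apply Rabs_def2 in Hw. lra.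
  - intros y Hy. exists (mkposreal (y - t) ltac:(lra)). intros w Hw. unfold disc in Hw. simpl in Hw.
    apply Rabs_def2 in Hw. lra.
  - intros y Hy. destruct (Rtotal_order y t) as [H|[H|H]]; auto. subst; contradiction.
  - exists s0. auto.
  - exists t0. auto.
  - lra.
Qed.

Lemma fence_eq (phiL phiU : Cantor -> R) (p q : fence phiL phiU) : proj1_sig p = proj1_sig q -> p = q.
Proof. destruct p as [p Hp], q as [q Hq]. simpl. intros ->. f_equal. apply proof_irrelevance. Qed.

Lemma pow_inv_le N k : (N <= k)%nat -> / 2 ^ k <= / 2 ^ N.
Proof.
  intros H. apply Rinv_le_contravar. apply pow_lt; lra. apply Rle_pow; auto. lra.
Qed.

Section Final.
Variable d : Cantor -> Cantor -> R.
Variable h : Cantor -> Cantor.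
Variable K : nat -> Cantor -> Prop.
Hypothesis Hc : compatible_metric d.
Hypothesis Hh : homeomorphism d h.
Hypothesis Hiso : isometry d h.
Hypothesis Hnd : forall x, nowhere_dense d (orbit h x).
Hypothesis HKc : forall n, mclosed d (K n).
Hypothesis HKi : forall n x, K n x <-> K n (h x).
Hypothesis HKnd : forall n, nowhere_dense d (K n).
Local Notation L := (Lf d h K).
Local Notation U := (Uf d h K).

Lemma fraisse : fraisse_fence d L U.
Proof.
  intros x I HI HIx.
  destruct (continuum_interval I HI) as [s0 [t0 [Hst HIe]]].
  assert (Hs0 : L x <= s0) by (destruct (HIx s0) as [A B]; [apply HIe; lra| auto]).
  assert (Ht0 : t0 <= U x) by (destruct (HIx t0) as [A B]; [apply HIe; lra| auto]).
  set (P := fun k y => y <> x /\ d x y < / 2 ^ k /\ L y < U y /\ Rabs (L y - s0) < / 2 ^ k /\ Rabs (U y - t0) < / 2 ^ k).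
  assert (HP : forall k, P k (epsilon (inhabits x) (P k))).
  { intro k. apply epsilon_spec. apply fraisse_point; auto. apply Rinv_0_lt_compat, pow_lt; lra. }
  exists (fun k => epsilon (inhabits x) (P k)).
  split; [|split; [|split]].
  - intro k. apply (HP k).
  - intros eps He. destruct (pow2_small eps He) as [N HN]. exists N. intros k Hk.
    destruct (HP k) as [_ [H1 _]]. rewrite (d_sym d Hc). pose proof (pow_inv_le N k Hk). lra.
  - intro k. apply arc_interval. apply (HP k).
  - intros eps He. destruct (pow2_small eps He) as [N HN]. exists N. intros k Hk.
    destruct (HP k) as [_ [_ [HLU [HL HU]]]]. pose proof (pow_inv_le N k Hk).
    set (y := epsilon (inhabits x) (P k)) in *.
    apply Rabs_def2 in HL. apply Rabs_def2 in HU.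
    split.
    + intros a [Ha1 Ha2]. exists (Rmax s0 (Rmin a t0)). split.
      apply HIe. split. apply Rmax_l. apply Rmax_lub; [lra| apply Rmin_r].
      apply Rabs_def1; unfold Rmax, Rmin; destruct (Rle_dec a t0); destruct (Rle_dec s0 _); lra.
    + intros b Hb. apply HIe in Hb. exists (Rmax (L y) (Rmin b (U y))). split.
      split. apply Rmax_l. apply Rmax_lub; [lra| apply Rmin_r].
      apply Rabs_def1; unfold Rmax, Rmin; destruct (Rle_dec b (U y)); destruct (Rle_dec (L y) _); lra.
Qed.

Lemma admissible_LU : admissible d L U.
Proof.
  split. apply L_range; auto. split. apply U_range; auto. split. apply L_lsc; auto.
  split. apply U_usc; auto. apply L_le_U; auto.
Qed.

Lemma L_h' z : L (h z) = L z.
Proof. apply L_h; auto. Qed.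
Lemma U_h' z : U (h z) = U z.
Proof. apply U_h; auto. Qed.

Lemma mem_map (f : Cantor -> Cantor) (Hf : forall z, L (f z) = L z /\ U (f z) = U z) (q : Cantor * R) :
  L (fst q) <= snd q <= U (fst q) -> L (fst (f (fst q), snd q)) <= snd (f (fst q), snd q) <= U (fst (f (fst q), snd q)).
Proof. simpl. destruct (Hf (fst q)) as [-> ->]. auto. Qed.

Definition fmap (f : Cantor -> Cantor) (Hf : forall z, L (f z) = L z /\ U (f z) = U z) (p : fence L U) : fence L U :=
  exist _ (f (fst (proj1_sig p)), snd (proj1_sig p)) (mem_map f Hf (proj1_sig p) (proj2_sig p)).

Lemma fmap_iso f Hf : (forall x y, d (f x) (f y) = d x y) -> isometry (fence_dist d L U) (fmap f Hf).
Proof. intros Hi p q. unfold fence_dist, fmap. simpl. rewrite Hi. reflexivity. Qed.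

Lemma iso_cont (X : Type) (dX : X -> X -> R) f : isometry dX f -> mcontinuous dX dX f.
Proof. intros Hi x eps He. exists eps. split; auto. intros y Hy. rewrite Hi. auto. Qed.

Lemma good : good_fence d h L U.
Proof.
  split. apply admissible_LU. split. apply fraisse.
  destruct Hh as [g [Hgh [Hhg _]]].
  assert (Hfh : forall z, L (h z) = L z /\ U (h z) = U z) by (intro z; split; [apply L_h'|apply U_h']).
  assert (Hfg : forall z, L (g z) = L z /\ U (g z) = U z).
  { intro z. rewrite <- (Hhg z) at 2 4. rewrite L_h', U_h'. auto. }
  assert (Hgi : forall x y, d (g x) (g y) = d x y).
  { intros x y. rewrite <- Hiso, !Hhg. auto. }
  exists (fmap h Hfh). split; [|split].
  - exists (fmap g Hfg). split; [|split; [|split]].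
    + intro p. apply fence_eq. destruct p as [[a t] Hp]. simpl. rewrite Hgh. auto.
    + intro p. apply fence_eq. destruct p as [[a t] Hp]. simpl. rewrite Hhg. auto.
    + apply iso_cont. apply fmap_iso. exact Hiso.
    + apply iso_cont. apply fmap_iso. exact Hgi.
  - apply fmap_iso. exact Hiso.
  - exists (fun p => fst (proj1_sig p)). split; [|split].
    + intros p eps He. exists eps. split; auto. intros q Hq. unfold fence_dist in Hq.
      pose proof (Rmax_l (d (fst (proj1_sig p)) (fst (proj1_sig q))) (Rabs (snd (proj1_sig p) - snd (proj1_sig q)))). lra.
    + intro y. assert (Hy : L (fst (y, L y)) <= snd (y, L y) <= U (fst (y, L y))).
      { simpl. split. lra. apply L_le_U; auto. }
      exists (exist _ (y, L y) Hy). reflexivity.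
    + intro p. reflexivity.
Qed.

Lemma collapse_on_K x : (exists n, K n x) -> L x = U x.
Proof. intros [n Hn]. apply (LU_K d h K Hc Hiso HKc HKi n x Hn). Qed.

End Final.

Theorem theorem6p4 (d : Cantor -> Cantor -> R) (h : Cantor -> Cantor) :
  compatible_metric d ->
  homeomorphism d h -> isometry d h ->
  (forall x, nowhere_dense d (orbit h x)) ->
  (exists phiL phiU : Cantor -> R, good_fence d h phiL phiU) /\
  (forall K : nat -> Cantor -> Prop,
     (forall n, mclosed d (K n)) ->
     (forall n x, K n x <-> K n (h x)) ->
     (forall n, nowhere_dense d (K n)) ->
     exists phiL phiU : Cantor -> R, good_fence d h phiL phiU /\
       (forall x, (exists n, K n x) -> phiL x = phiU x)).
Proof.
  intros Hc Hh Hiso Hnd.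
  assert (Main : forall K : nat -> Cantor -> Prop,
     (forall n, mclosed d (K n)) ->
     (forall n x, K n x <-> K n (h x)) ->
     (forall n, nowhere_dense d (K n)) ->
     exists phiL phiU : Cantor -> R, good_fence d h phiL phiU /\
       (forall x, (exists n, K n x) -> phiL x = phiU x)).
  { intros K HKc HKi HKnd. exists (Lf d h K), (Uf d h K). split.
    apply good; auto. apply collapse_on_K; auto. }
  split; auto.
  destruct (Main (fun _ _ => False)) as [phiL [phiU [HG _]]].
  - intros n x Hx. unfold mclosure in Hx. destruct (Hx 1) as [y [[] _]]. lra.
  - intros n x. tauto.
  - intros n x [eps [He Hin]]. specialize (Hin x). rewrite (d_refl d Hc) in Hin. destruct (Hin He 1) as [y [[] _]]. lra.
  - exists phiL, phiU. auto.
Qed.
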